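(* Let $\chi>0$, $\phi\in C^1(\mathbb{R})$ with $\phi'>0$, $\phi(0)>0$, $s>\chi\phi(0)$, $u_-\ge0$, and let $g\in C^1([0,\infty))$ be positive with exactly one $\beta>0$ such that $g'<0$ on $[0,\beta)$ and $g'>0$ on $(\beta,\infty)$; let $g_\infty:=\lim_{V\to\infty}g(V)\in(0,\infty]$. Consider equilibria $(V,0)$, $V\ge0$, of $V'=W$, $W'=-h(W)+g(V)$, $h(W)=\frac{u_-(\chi\phi(0)-s)}{\chi\phi(W)-s}$. (1) If $g_\infty<g(0)$: (i) if $u_-<g(\beta)$ or $u_->g(0)$ there is no equilibrium; (ii) if $u_-=g(\beta)$ or $g_\infty<u_-<g(0)$ there is exactly one equilibrium $E=(v,0)$, with $v\le\beta$, and $E$ is a stable focus, a stable node, or non-hyperbolic; (iii) if $g(\beta)<u_-<g_\infty$ there are exactly two equilibria $E_\pm=(v_\pm,0)$ with $0<v_+<\beta<v_-$, $u_-=g(v_\pm)$, $E_-$ a saddle and $E_+$ a stable focus or stable node. (2) If $g_\infty>g(0)$ (including $g_\infty=+\infty$): (i) if $u_-<g(\beta)$ or $u_-\ge g_\infty$ there is no equilibrium; (ii) if $u_-=g(\beta)$ or $g(0)<u_-<g_\infty$ there is exactly one equilibrium $E=(v,0)$, with $v\ge\beta$, and $E$ is a saddle or non-hyperbolic; (iii) if $g(\beta)<u_-\le g(0)$ there are exactly two equilibria $E_\pm=(v_\pm,0)$ with $0\le v_+<\beta<v_-$, $u_-=g(v_\pm)$, $E_-$ a saddle and $E_+$ a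 stable focus or stable node. (3) If $g_\infty=g(0)$: (i) if $u_-<g(\beta)$ or $u_->g(0)$ there is no equilibrium; (ii) if $u_-=g(\beta)$ there is exactly one equilibrium $E=(\beta,0)$, and it is non-hyperbolic; (iii) if $g(\beta)<u_-<g(0)$ there are exactly two equilibria $E_\pm=(v_\pm,0)$ with $0<v_+<\beta<v_-$, $u_-=g(v_\pm)$, $E_-$ a saddle and $E_+$ a stable focus or stable node. *)

(* Defs.v *)
From HB Require Import structures.
From mathcomp Require Import all_boot all_order all_algebra.
From mathcomp Require Import all_classical all_reals all_analysis.
From mathcomp Require Import complex.

Set Implicit Arguments.
Unset Strict Implicit.
Unset Printing Implicit Defensive.

Import Order.TTheory GRing.Theory Num.Theory.
Import numFieldNormedType.Exports.
Local Open Scope ring_scope.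

Section Defs.
Variable R : realType.

Definition hfun (chi : R) (phi : R -> R) (s um : R) (W : R) : R :=
  um * (chi * phi 0 - s) / (chi * phi W - s).

Definition vfield (chi : R) (phi : R -> R) (s um : R) (g : R -> R)
    (p : R * R) : R * R :=
  (p.2, - hfun chi phi s um p.2 + g p.1).

Definition equilibrium (chi : R) (phi : R -> R) (s um : R) (g : R -> R)
    (p : R * R) : Prop :=
  0 <= p.1 /\ vfield chi phi s um g p = (0, 0).

Definition pc (i : 'I_2) (q : R * R) : R := if i == ord0 then q.1 else q.2.

Definition jacobian (F : R * R -> R * R) (p : R * R) : 'M[R]_2 :=
  \matrix_(i < 2, j < 2)
    derive1 (fun t => pc i (F (if j == ord0 then (t, p.2) else (p.1, t)))) (pc j p).

Definition ceigen (A : 'M[R]_2) (l : R[i]) : Prop :=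
  eigenvalue (map_mx (real_complex R) A) l.

Definition non_hyperbolic (F : R * R -> R * R) (p : R * R) : Prop :=
  exists l, ceigen (jacobian F p) l /\ complex.Re l = 0.

Definition saddle (F : R * R -> R * R) (p : R * R) : Prop :=
  exists l1 l2, [/\ ceigen (jacobian F p) l1, ceigen (jacobian F p) l2,
    complex.Im l1 = 0, complex.Im l2 = 0 & complex.Re l1 < 0 < complex.Re l2].

Definition stable_node (F : R * R -> R * R) (p : R * R) : Prop :=
  forall l, ceigen (jacobian F p) l -> complex.Im l = 0 /\ complex.Re l < 0.

Definition stable_focus (F : R * R -> R * R) (p : R * R) : Prop :=
  forall l, ceigen (jacobian F p) l -> complex.Im l != 0 /\ complex.Re l < 0.

End Defs.

(* Main.v *)
Require Import Defs.
From HB Require Import structures.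
From mathcomp Require Import all_boot all_order all_algebra.
From mathcomp Require Import all_classical all_reals all_analysis.
From mathcomp Require Import complex.
From mathcomp Require Import ring lra.

Import Order.TTheory GRing.Theory Num.Theory.
Import numFieldNormedType.Exports.
Local Open Scope ring_scope.

Lemma det2 (R : comPzRingType) (A : 'M[R]_2) :
  \det A = A 0 0 * A 1 1 - A 0 1 * A 1 0.
Proof.
rewrite (expand_det_row _ 0) big_ord_recl big_ord1 /cofactor !det_mx11 !mxE /=.
rewrite expr0 expr1 mul1r mulN1r mulrN.
by congr (A _ _ * A _ _ - A _ _ * A _ _); apply/val_inj.
Qed.

Lemma eig2 (F : fieldType) (A : 'M[F]_2) a :
  eigenvalue A a = ((a - A 0 0) * (a - A 1 1) - A 0 1 * A 1 0 == 0).
Proof.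
transitivity (\det (a%:M - A) == 0).
  apply/eigenvalueP/det0P=> [[v Av_av v_nz] | [v v_nz Av_av]]; exists v => //.
    by rewrite mulmxBr Av_av mul_mx_scalar subrr.
  by apply/eqP; rewrite -mul_mx_scalar eq_sym -subr_eq0 -mulmxBr Av_av.
rewrite det2 !mxE /=. 
by rewrite !mulr1n !mulr0n !sub0r !mulrNN.
Qed.

Section Main.
Variable R : realType.
Variables (chi : R) (phi : R -> R) (s um : R) (g : R -> R) (beta : R) (ginf : \bar R).
Hypothesis hchi : 0 < chi.
Hypothesis hphi_d : forall x : R, derivable phi x 1.
Hypothesis hphi' : forall x : R, 0 < derive1 phi x.
Hypothesis hs : chi * phi 0 < s.
Hypothesis hum : 0 <= um.
Hypothesis hg_d : forall x : R, 0 <= x -> derivable g x 1.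
Hypothesis hg_pos : forall x : R, 0 <= x -> 0 < g x.
Hypothesis hbeta : 0 < beta.
Hypothesis hg_dec : forall x : R, 0 <= x < beta -> derive1 g x < 0.
Hypothesis hg_inc : forall x : R, beta < x -> 0 < derive1 g x.
Hypothesis hginf : ((g x)%:E @[x --> +oo] --> ginf)%classic.



Lemma ceigenE (A : 'M[R]_2) (t d : R) (l : R[i]) :
  A 0 0 = 0 -> A 0 1 = 1 -> A 1 0 = d -> A 1 1 = t ->
  ceigen A l <-> (complex.Re l * (complex.Re l - t) - complex.Im l * complex.Im l - d = 0 /\
                  complex.Re l * complex.Im l + complex.Im l * (complex.Re l - t) = 0)%R.
Proof.
move=> h00 h01 h10 h11; rewrite /ceigen eig2 !mxE h00 h01 h10 h11.
case: l => x y /=.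
rewrite eq_complex /=. rewrite ?subr0 ?mulr0 ?mul0r ?mul1r ?add0r ?addr0 ?oppr0.
rewrite (addr0 d) (addr0 (x * y + y * (x - t))).
by split => [/andP[/eqP h1 /eqP h2] | [h1 h2]]; [ | rewrite h1 h2 eqxx].
Qed.


Lemma eig_saddle (A : 'M[R]_2) (t d : R) :
  A 0 0 = 0 -> A 0 1 = 1 -> A 1 0 = d -> A 1 1 = t -> 0 < d ->
  exists l1 l2 : R[i], [/\ ceigen A l1, ceigen A l2,
    complex.Im l1 = 0, complex.Im l2 = 0 & complex.Re l1 < 0 < complex.Re l2].
Proof.
move=> h00 h01 h10 h11 dpos.
have hd : 0 <= t ^+ 2 + 4 * d by rewrite addr_ge0 ?sqr_ge0 // mulr_ge0 // ltW.
set sq := Num.sqrt (t ^+ 2 + 4 * d).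
have s0 : 0 <= sq by apply: sqrtr_ge0.
have ss : sq ^+ 2 = t ^+ 2 + 4 * d by rewrite sqr_sqrtr.
rewrite !expr2 in ss.
exists (Complex ((t - sq) / 2) 0), (Complex ((t + sq) / 2) 0).
split => //=.
- by apply/(ceigenE _ _ _ _ h00 h01 h10 h11) => /=; split; nra.
- by apply/(ceigenE _ _ _ _ h00 h01 h10 h11) => /=; split; nra.
- apply/andP; split; nra.
Qed.

Lemma eig_nonhyp (A : 'M[R]_2) (t d : R) :
  A 0 0 = 0 -> A 0 1 = 1 -> A 1 0 = d -> A 1 1 = t -> d = 0 ->
  exists l : R[i], ceigen A l /\ complex.Re l = 0.
Proof.
move=> h00 h01 h10 h11 d0; exists (Complex 0 0); split => //.
by apply/(ceigenE _ _ _ _ h00 h01 h10 h11) => /=; rewrite d0; split; lra.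
Qed.

Lemma eig_stable (A : 'M[R]_2) (t d : R) :
  A 0 0 = 0 -> A 0 1 = 1 -> A 1 0 = d -> A 1 1 = t -> d < 0 -> t < 0 ->
  (forall l, ceigen A l -> complex.Im l != 0 /\ complex.Re l < 0) \/
  (forall l, ceigen A l -> complex.Im l = 0 /\ complex.Re l < 0).
Proof.
move=> h00 h01 h10 h11 dneg tneg.
have [disc|disc] := ltP (t ^+ 2 + 4 * d) 0; rewrite expr2 in disc.
- left => l /(ceigenE _ _ _ _ h00 h01 h10 h11); case: l => x y /= [e1 e2].
  have e3 : y * (2 * x - t) = 0 by rewrite -e2; ring.
  move: e3 => /eqP; rewrite mulf_eq0 => /orP[/eqP y0|/eqP hx].
    by exfalso; rewrite y0 in e1; have := sqr_ge0 (2 * x - t); rewrite expr2; nra.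
  split; last by lra.
  by apply/eqP => y0; rewrite y0 in e1; nra.
- right => l /(ceigenE _ _ _ _ h00 h01 h10 h11); case: l => x y /= [e1 e2].
  have e3 : y * (2 * x - t) = 0 by rewrite -e2; ring.
  have y0 : y = 0.
    move: e3 => /eqP; rewrite mulf_eq0 => /orP[/eqP //|/eqP hx].
    have hx' : x = t / 2 by lra.
    rewrite hx' in e1.
    have : y * y <= 0 by nra.
    move=> hy; have : y * y == 0 by rewrite eq_le hy -expr2 sqr_ge0.
    by rewrite mulf_eq0 orbb => /eqP.
  split => //; rewrite y0 in e1; nra.
Qed.

Lemma gcont (x : R) : 0 <= x -> {for x, continuous g}.
Proof. by move=> x0; apply/differentiable_continuous/derivable1_diffP/hg_d. Qed.

Lemma gwithin (a b : R) : 0 <= a -> {within `[a, b], continuous g}%classic.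
Proof.
move=> a0; apply: continuous_subspace_itv => x; rewrite in_itv /= => /andP[ax _].
by apply: gcont; apply: le_trans ax.
Qed.

Lemma gisd (x : R) : 0 <= x -> is_derive x 1 g (derive1 g x).
Proof. by move=> x0; rewrite derive1E; apply: derivableP; apply: hg_d. Qed.

Lemma gdec (a b : R) : 0 <= a -> a < b -> b <= beta -> g b < g a.
Proof.
move=> a0 ab bb.
have hd : forall x : R, x \in `]a, b[ -> is_derive x 1 g (derive1 g x).
  move=> x; rewrite in_itv /= => /andP[ax _]; apply: gisd; apply: le_trans (ltW ax).
  exact: a0.
have [c cin E] := MVT ab hd (gwithin a b a0).
move: cin; rewrite in_itv /= => /andP[ac cb].
have : derive1 g c < 0 by apply: hg_dec; apply/andP; split; [apply: le_trans (ltW ac)|apply: lt_le_trans bb].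
move=> gc; have : (g b - g a) < 0 by rewrite E; nra.
by rewrite subr_lt0.
Qed.

Lemma ginc (a b : R) : beta <= a -> a < b -> g a < g b.
Proof.
move=> a0 ab.
have a0' : 0 <= a by apply: le_trans a0; apply: ltW.
have hd : forall x : R, x \in `]a, b[ -> is_derive x 1 g (derive1 g x).
  move=> x; rewrite in_itv /= => /andP[ax _]; apply: gisd; apply: le_trans (ltW ax).
  exact: a0'.
have [c cin E] := MVT ab hd (gwithin a b a0').
move: cin; rewrite in_itv /= => /andP[ac cb].
have gc : 0 < derive1 g c by apply: hg_inc; apply: le_lt_trans ac.
have : 0 < (g b - g a) by rewrite E; nra.
by rewrite subr_gt0.
Qed.

Lemma gbeta0 : derive1 g beta = 0.
Proof.
have h : is_derive beta 1 g 0.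
  apply: (@derive1_at_min _ g 0 (beta *+ 2)).
  - by rewrite mulrn_wge0 // ltW.
  - by move=> t; rewrite in_itv /= => /andP[t0 _]; apply: hg_d; apply: ltW.
  - by rewrite in_itv /= hbeta /= mulr2n ltrDl.
  move=> t; rewrite in_itv /= => /andP[t0 _].
  have [tb|bt] := ltP t beta; first by apply/ltW/gdec => //; apply: ltW.
  by move: bt; rewrite le_eqVlt => /orP[/eqP ->//|bt]; apply/ltW/ginc.
by rewrite derive1E; apply: derive_val.
Qed.


Lemma near_wit (P : R -> Prop) (b : R) :
  (\forall x \near +oo, P x) -> exists x, b < x /\ P x.
Proof.
case=> M [Mr HM].
have h1 : M <= Num.max M b by rewrite le_max lexx.
have h2 : b <= Num.max M b by rewrite le_max lexx orbT.
exists (Num.max M b + 1); split; last apply: HM; lra.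
Qed.


Lemma ev_gt (a : R) : (a%:E < ginf)%E -> \forall x \near +oo, (a%:E < (g x)%:E)%E.
Proof.
move=> ha.
have H : nbhs ginf [set y : \bar R | (a%:E < y)%E]%classic.
  move: ha; case: ginf => [r||] ha //.
  - by apply: (@nbhs_open_ereal_gt _ r (fun=> a)).
  - exact: nbhs_open_ereal_pinfty.
exact: hginf H.
Qed.

Lemma ev_lt (a : R) : (ginf < a%:E)%E -> \forall x \near +oo, ((g x)%:E < a%:E)%E.
Proof.
move=> ha.
have H : nbhs ginf [set y : \bar R | (y < a%:E)%E]%classic.
  move: ha; case: ginf => [r||] ha //.
  - by apply: (@nbhs_open_ereal_lt _ r (fun=> a)).
  - exact: nbhs_open_ereal_ninfty.
exact: hginf H.
Qed.

Lemma F_b (a : R) : (a%:E < ginf)%E -> exists x, beta < x /\ a < g x.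
Proof. by move=> /ev_gt /(near_wit _ beta) [x [bx hx]]; exists x; split; rewrite // -lte_fin. Qed.

Lemma F_a (x : R) : beta <= x -> ((g x)%:E < ginf)%E.
Proof.
move=> bx; rewrite ltNge; apply/negP => hle.
have h1 : g x < g (x + 1) by apply: ginc => //; rewrite ltrDl.
have : (ginf < (g (x + 1))%:E)%E by apply: le_lt_trans hle _; rewrite lte_fin.
move=> /ev_lt /(near_wit _ (x + 1)) [y [xy hy]].
rewrite lte_fin in hy.
have : g (x + 1) < g y by apply: ginc => //; apply: le_trans bx _; rewrite lerDl.
by move=> h2; have := lt_trans h2 hy; rewrite ltxx.
Qed.

Let c0 := chi * phi 0 - s.
Lemma c0_neq : c0 != 0.
Proof. by rewrite /c0 subr_eq0 lt_eqF. Qed.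

Lemma h0 : hfun chi phi s um 0 = um.
Proof. by rewrite /hfun mulfK // c0_neq. Qed.

Lemma equiE (p : R * R) :
  equilibrium chi phi s um g p <-> [/\ 0 <= p.1, p.2 = 0 & g p.1 = um].
Proof.
case: p => x y; rewrite /equilibrium /vfield /=; split.
  case=> x0 [y0 e]; rewrite y0 h0 in e; split => //.
  by apply/eqP; rewrite -subr_eq0 addrC; apply/eqP.
case=> x0 y0 e; split => //; rewrite y0 h0 e; congr pair; rewrite addrC subrr //.
Qed.

Lemma jac (v : R) : derivable g v 1 ->
  let J := Defs.jacobian (vfield chi phi s um g) (v, 0) in
  [/\ J 0 0 = 0, J 0 1 = 1, J 1 0 = derive1 g v & 0 < um -> J 1 1 < 0].
Proof.
move=> gv; rewrite /Defs.jacobian /= !mxE /pc /=; split.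
- exact: derive1_cst.
- exact: derive1_id.
- have P : is_derive v 1 (fun t => - hfun chi phi s um 0 + g t) (0 + derive1 g v).
    have G : is_derive v 1 g (derive1 g v) by rewrite derive1E; apply: derivableP.
    exact: (is_deriveD (is_derive_cst (- hfun chi phi s um 0) v 1) G).
  by rewrite derive1E (@derive_val _ _ _ _ _ _ _ P) add0r.
move=> um0.
have P : is_derive (0 : R) (1 : R) phi (derive1 phi 0) by rewrite derive1E; apply: derivableP.
have Q : is_derive (0 : R) (1 : R) (fun t => chi * phi t - s) (chi *: derive1 phi 0 - 0)
  := is_deriveB (is_deriveZ chi P) (is_derive_cst s (0 : R) (1 : R)).
have V := @is_deriveV _ (fun t => chi * phi t - s) 0 _ 1 c0_neq Q.
have Z := is_deriveZ (um * c0) V.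
have N := is_deriveN Z.
have D := is_deriveD N (is_derive_cst (g v) (0 : R) (1 : R)).
have D' : is_derive (0 : R) (1 : R) (fun t => - hfun chi phi s um t + g v)
   (- ((um * c0) *: (- c0 ^- 2 *: (chi *: derive1 phi 0 - 0))) + 0) := D.
rewrite derive1E (@derive_val _ _ _ _ _ _ _ D').
rewrite subr0 addr0 /GRing.scale /=.
have c0n : c0 < 0 by rewrite /c0 subr_lt0.
have w0 : 0 < c0 ^- 2 by rewrite invr_gt0 exprn_even_gt0 //= lt_eqF.
have p0 := hphi' (0 : R).
have K : um * c0 < 0 by nra.
have X : 0 < c0 ^- 2 * (chi * derive1 phi (0 : R)) by rewrite !mulr_gt0.
rewrite mulNr mulrN opprK.
nra.
Qed.

Local Open Scope classical_set_scope.


Lemma cl_saddle (v : R) : 0 <= v -> 0 < derive1 g v -> saddle (vfield chi phi s um g) (v, 0).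
Proof.
move=> v0 dp; have [h00 h01 h10 _] := jac v (hg_d v v0).
exact: (eig_saddle _ _ _ h00 h01 h10 erefl dp).
Qed.

Lemma cl_nonhyp (v : R) : 0 <= v -> derive1 g v = 0 -> non_hyperbolic (vfield chi phi s um g) (v, 0).
Proof.
move=> v0 dp; have [h00 h01 h10 _] := jac v (hg_d v v0).
exact: (eig_nonhyp _ _ _ h00 h01 h10 erefl dp).
Qed.

Lemma cl_stable (v : R) : 0 <= v -> derive1 g v < 0 -> 0 < um ->
  stable_focus (vfield chi phi s um g) (v, 0) \/ stable_node (vfield chi phi s um g) (v, 0).
Proof.
move=> v0 dn um0; have [h00 h01 h10 h11] := jac v (hg_d v v0).
exact: (eig_stable _ _ _ h00 h01 h10 erefl dn (h11 um0)).
Qed.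

Lemma L_ge_beta (w : R) : 0 <= w -> g beta <= g w.
Proof.
move=> w0; case: (ltgtP w beta) => [wb|bw|->//].
- by apply/ltW/gdec.
- by apply/ltW/ginc.
Qed.

Lemma L_beta_uniq (w : R) : 0 <= w -> g w = g beta -> w = beta.
Proof.
move=> w0 e; case: (ltgtP w beta) => [wb|bw|->//].
- by have := gdec _ _ w0 wb (lexx beta); rewrite e ltxx.
- by have := ginc _ _ (lexx beta) bw; rewrite e ltxx.
Qed.

Lemma L_le_g0 (w : R) : 0 <= w <= beta -> g w <= g 0.
Proof.
case/andP => w0 wb; move: w0; rewrite le_eqVlt => /orP[/eqP <-//|w0].
by apply/ltW/gdec.
Qed.

Lemma L_bound (w : R) : 0 <= w -> g w <= g 0 \/ ((g w)%:E < ginf)%E.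
Proof.
move=> w0; case: (leP w beta) => wb.
  by left; apply: L_le_g0; rewrite w0 wb.
by right; apply: F_a; apply: ltW.
Qed.

Lemma uniq_left (a b : R) : 0 <= a <= beta -> 0 <= b <= beta -> g a = g b -> a = b.
Proof.
move=> /andP[a0 ab] /andP[b0 bb] e; case: (ltgtP a b) => [lt|lt|//].
- by have := gdec _ _ a0 lt bb; rewrite e ltxx.
- by have := gdec _ _ b0 lt ab; rewrite e ltxx.
Qed.

Lemma uniq_right (a b : R) : beta <= a -> beta <= b -> g a = g b -> a = b.
Proof.
move=> a0 b0 e; case: (ltgtP a b) => [lt|lt|//].
- by have := ginc _ _ a0 lt; rewrite e ltxx.
- by have := ginc _ _ b0 lt; rewrite e ltxx.
Qed.

Lemma ex_left : g beta <= um <= g 0 -> exists v, 0 <= v <= beta /\ g v = um.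
Proof.
move=> /andP[h1 h2].
have := @IVT R g 0 beta um (ltW hbeta) (gwithin 0 beta (lexx 0)).
case.
  by rewrite ge_min le_max h1 h2 orbT.
by move=> c; rewrite in_itv /= => cin e; exists c.
Qed.

Lemma ex_right : g beta <= um -> (um%:E < ginf)%E -> exists v, beta <= v /\ g v = um.
Proof.
move=> h1 /F_b [x [bx ux]].
have := @IVT R g beta x um (ltW bx) (gwithin beta x (ltW hbeta)).
case.
  by rewrite ge_min le_max h1 (ltW ux) /= orbT.
by move=> c; rewrite in_itv /= => /andP[c1 _] e; exists c.
Qed.

Lemma equi_none : (forall w, 0 <= w -> g w != um) ->
  forall p, ~ equilibrium chi phi s um g p.
Proof.
by move=> H p /equiE [p0 _ e]; move: (H _ p0); rewrite e eqxx.
Qed.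

Lemma equi_one (v : R) : 0 <= v -> g v = um ->
  (forall w, 0 <= w -> g w = um -> w = v) ->
  forall p, equilibrium chi phi s um g p <-> p = (v, 0).
Proof.
move=> v0 e H [x y]; rewrite equiE /=; split.
  by case=> x0 -> ex; rewrite (H x x0 ex).
by case=> -> ->.
Qed.

Lemma equi_two (vp vm : R) : g beta < um -> 0 <= vp < beta -> beta < vm ->
  g vp = um -> g vm = um ->
  forall p, equilibrium chi phi s um g p <-> p = (vp, 0) \/ p = (vm, 0).
Proof.
move=> gb /andP[vp0 vpb] bvm ep em [x y]; rewrite equiE /=; split.
  case=> x0 -> ex; case: (leP x beta) => xb.
    by left; rewrite (@uniq_left x vp) ?x0 ?xb ?vp0 ?(ltW vpb) // ex ep.
  by right; rewrite (@uniq_right x vm) ?(ltW xb) ?(ltW bvm) // ex em.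
case=> [[-> ->]|[-> ->]]; split => //.
by apply: le_trans (ltW bvm); apply: ltW.
Qed.

Lemma st_left (v : R) : 0 <= v < beta -> g v = um ->
  stable_focus (vfield chi phi s um g) (v, 0) \/ stable_node (vfield chi phi s um g) (v, 0).
Proof.
move=> /andP[v0 vb] e; apply: cl_stable => //.
  by apply: hg_dec; rewrite v0 vb.
by rewrite -e; apply: hg_pos.
Qed.

Lemma sd_right (v : R) : beta < v -> saddle (vfield chi phi s um g) (v, 0).
Proof.
move=> bv; apply: cl_saddle; last exact: hg_inc.
by apply: le_trans (ltW bv); apply: ltW.
Qed.

Lemma nh_beta : non_hyperbolic (vfield chi phi s um g) (beta, 0).
Proof. by apply: cl_nonhyp; [apply: ltW | apply: gbeta0]. Qed.

Lemma vp_ex : g beta < um <= g 0 -> exists vp, 0 <= vp < beta /\ g vp = um.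
Proof.
case/andP=> h1 h2; have [v [/andP[v0 vb] ev]] := ex_left (ltac:(by rewrite (ltW h1) h2)).
exists v; split => //; rewrite v0 /= lt_neqAle vb andbT; apply/eqP => vbe.
by move: h1; rewrite -ev vbe ltxx.
Qed.

Lemma vp_pos (v : R) : um < g 0 -> g v = um -> 0 <= v -> 0 < v.
Proof.
move=> h ev v0; have [e0|vn] := eqVneq v 0; first by move: h; rewrite -ev e0 ltxx.
by rewrite lt_neqAle eq_sym vn v0.
Qed.

Lemma vm_ex : g beta < um -> (um%:E < ginf)%E -> exists vm, beta < vm /\ g vm = um.
Proof.
move=> h1 h2; have [v [vb ev]] := ex_right (ltW h1) h2.
exists v; split => //; rewrite lt_neqAle vb andbT; apply/eqP => vbe.
by move: h1; rewrite -ev vbe ltxx.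
Qed.

Lemma main_M : [/\
  (ginf < (g 0)%:E)%E ->
  [/\ (um < g beta \/ g 0 < um) ->
        forall p, ~ equilibrium chi phi s um g p,
      (um = g beta \/ ((ginf < um%:E)%E /\ um < g 0)) ->
        exists v : R,
          [/\ forall p, equilibrium chi phi s um g p <-> p = (v, 0),
              v <= beta &
              [\/ stable_focus (vfield chi phi s um g) (v, 0),
                  stable_node (vfield chi phi s um g) (v, 0) |
                  non_hyperbolic (vfield chi phi s um g) (v, 0)]]
    & (g beta < um /\ (um%:E < ginf)%E) ->
        exists vp vm : R,
          [/\ forall p, equilibrium chi phi s um g p <-> p = (vp, 0) \/ p = (vm, 0),
              0 < vp < beta /\ beta < vm,
              um = g vp /\ um = g vm,
              saddle (vfield chi phi s um g) (vm, 0) &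
              stable_focus (vfield chi phi s um g) (vp, 0) \/
              stable_node (vfield chi phi s um g) (vp, 0)]],
  ((g 0)%:E < ginf)%E ->
  [/\ (um < g beta \/ (ginf <= um%:E)%E) ->
        forall p, ~ equilibrium chi phi s um g p,
      (um = g beta \/ (g 0 < um /\ (um%:E < ginf)%E)) ->
        exists v : R,
          [/\ forall p, equilibrium chi phi s um g p <-> p = (v, 0),
              beta <= v &
              saddle (vfield chi phi s um g) (v, 0) \/
              non_hyperbolic (vfield chi phi s um g) (v, 0)]
    & (g beta < um <= g 0) ->
        exists vp vm : R,
          [/\ forall p, equilibrium chi phi s um g p <-> p = (vp, 0) \/ p = (vm, 0),
              0 <= vp < beta /\ beta < vm,
              um = g vp /\ um = g vm,
              saddle (vfield chi phi s um g) (vm, 0) &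
              stable_focus (vfield chi phi s um g) (vp, 0) \/
              stable_node (vfield chi phi s um g) (vp, 0)]] &
  ginf = (g 0)%:E ->
  [/\ (um < g beta \/ g 0 < um) ->
        forall p, ~ equilibrium chi phi s um g p,
      um = g beta ->
        (forall p, equilibrium chi phi s um g p <-> p = (beta, 0)) /\
        non_hyperbolic (vfield chi phi s um g) (beta, 0)
    & (g beta < um < g 0) ->
        exists vp vm : R,
          [/\ forall p, equilibrium chi phi s um g p <-> p = (vp, 0) \/ p = (vm, 0),
              0 < vp < beta /\ beta < vm,
              um = g vp /\ um = g vm,
              saddle (vfield chi phi s um g) (vm, 0) &
              stable_focus (vfield chi phi s um g) (vp, 0) \/
              stable_node (vfield chi phi s um g) (vp, 0)]]].
Proof.
have gb0 : g beta <= g 0 by apply: L_ge_beta.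
have gbinf : ((g beta)%:E < ginf)%E by apply: F_a.
have none_lt : um < g beta -> forall p, ~ equilibrium chi phi s um g p.
  move=> h; apply: equi_none => w w0; rewrite gt_eqF //.
  exact: lt_le_trans h (L_ge_beta w w0).
have one_beta : um = g beta ->
    forall p, equilibrium chi phi s um g p <-> p = (beta, 0).
  move=> e; apply: equi_one; [exact: ltW | by rewrite e |].
  by move=> w w0 ew; apply: L_beta_uniq => //; rewrite ew.
have none_gen : (forall w, 0 <= w -> g w < um) -> forall p, ~ equilibrium chi phi s um g p.
  by move=> H; apply: equi_none => w w0; rewrite lt_eqF // H.
split.
-
  move=> H1; split.
  + case=> [h|h]; first exact: none_lt.
    apply: none_gen => w w0; case: (L_bound w w0) => hw; first exact: le_lt_trans hw h.
    by rewrite -lte_fin; apply: lt_trans hw _; apply: lt_trans H1 _; rewrite lte_fin.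
  + case=> [e|[h1 h2]].
      exists beta; split => //; [exact: one_beta | apply: Or33; exact: nh_beta].
    have gbum : g beta < um by rewrite -lte_fin; apply: lt_trans gbinf h1.
    have [v [/andP[v0 vb] ev]] := vp_ex (ltac:(by rewrite gbum (ltW h2))).
    exists v; split; last 2 first.
    * exact: ltW.
    * by case: (st_left v (ltac:(by rewrite v0 vb)) ev) => ?; [apply: Or31|apply: Or32].
    apply: equi_one => // w w0 ew; case: (leP w beta) => wb.
      by apply: uniq_left; rewrite ?w0 ?wb ?v0 ?(ltW vb) // ew ev.
    have := F_a w (ltW wb); rewrite ew => /(lt_trans h1); by rewrite ltxx.
  + case=> h1 h2.
    have um0 : um < g 0 by rewrite -lte_fin; apply: lt_trans h2 H1.
    have [vp [/andP[vp0 vpb] ep]] := vp_ex (ltac:(by rewrite h1 (ltW um0))).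
    have [vm [bvm em]] := vm_ex h1 h2.
    exists vp, vm; split.
    * by apply: equi_two; rewrite ?vp0 ?vpb.
    * by rewrite vpb bvm (vp_pos vp um0 ep vp0).
    * by [].
    * exact: sd_right.
    * by apply: st_left; rewrite ?vp0 ?vpb.
-
  move=> H2; split.
  + case=> [h|h]; first exact: none_lt.
    apply: none_gen => w w0; rewrite -lte_fin; case: (L_bound w w0) => hw.
      by apply: lt_le_trans h; apply: le_lt_trans H2; rewrite lee_fin.
    exact: lt_le_trans hw h.
  + case=> [e|[h1 h2]].
      exists beta; split => //; [exact: one_beta | right; exact: nh_beta].
    have gbum : g beta < um by apply: le_lt_trans gb0 h1.
    have [v [bv ev]] := vm_ex gbum h2.
    exists v; split; last 2 first.
    * exact: ltW.
    * by left; apply: sd_right.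
    apply: equi_one => //; first by apply: le_trans (ltW bv); apply: ltW.
    move=> w w0 ew; case: (leP w beta) => wb.
      by have := L_le_g0 w (ltac:(by rewrite w0 wb)); rewrite ew leNgt h1.
    by apply: uniq_right; rewrite ?(ltW wb) ?(ltW bv) // ew ev.
  + case/andP=> h1 h2.
    have [vp [/andP[vp0 vpb] ep]] := vp_ex (ltac:(by rewrite h1 h2)).
    have uinf : (um%:E < ginf)%E by apply: le_lt_trans H2; rewrite lee_fin.
    have [vm [bvm em]] := vm_ex h1 uinf.
    exists vp, vm; split.
    * by apply: equi_two; rewrite ?vp0 ?vpb.
    * by rewrite vpb bvm vp0.
    * by [].
    * exact: sd_right.
    * by apply: st_left; rewrite ?vp0 ?vpb.
-
  move=> H3; split.
  + case=> [h|h]; first exact: none_lt.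
    apply: none_gen => w w0; case: (L_bound w w0) => hw; first exact: le_lt_trans hw h.
    by move: hw; rewrite H3 lte_fin => hw; apply: lt_trans hw h.
  + by move=> e; split; [exact: one_beta | exact: nh_beta].
  + case/andP=> h1 h2.
    have [vp [/andP[vp0 vpb] ep]] := vp_ex (ltac:(by rewrite h1 (ltW h2))).
    have [vm [bvm em]] := vm_ex h1 (ltac:(by rewrite H3 lte_fin)).
    exists vp, vm; split.
    * by apply: equi_two; rewrite ?vp0 ?vpb.
    * by rewrite vpb bvm (vp_pos vp h2 ep vp0).
    * by [].
    * exact: sd_right.
    * by apply: st_left; rewrite ?vp0 ?vpb.
Qed.

End Main.

Local Open Scope classical_set_scope.

Theorem proposition2p6 (R : realType) (chi : R) (phi : R -> R) (s um : R)
  (g : R -> R) (beta : R) (ginf : \bar R)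
  (hchi : 0 < chi)
  (hphi_d : forall x : R, derivable phi x 1)
  (hphi_c : continuous (derive1 phi))
  (hphi' : forall x : R, 0 < derive1 phi x)
  (hphi0 : 0 < phi 0)
  (hs : chi * phi 0 < s)
  (hum : 0 <= um)
  (hg_d : forall x : R, 0 <= x -> derivable g x 1)
  (hg_c : {within [set x : R | 0 <= x], continuous (derive1 g)})
  (hg_pos : forall x : R, 0 <= x -> 0 < g x)
  (hbeta : 0 < beta)
  (hg_dec : forall x : R, 0 <= x < beta -> derive1 g x < 0)
  (hg_inc : forall x : R, beta < x -> 0 < derive1 g x)
  (hginf : (g x)%:E @[x --> +oo] --> ginf) :
  [/\
  (* (1) g_oo < g(0) *)
  (ginf < (g 0)%:E)%E ->
  [/\ (um < g beta \/ g 0 < um) ->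
        forall p, ~ equilibrium chi phi s um g p,
      (um = g beta \/ ((ginf < um%:E)%E /\ um < g 0)) ->
        exists v : R,
          [/\ forall p, equilibrium chi phi s um g p <-> p = (v, 0),
              v <= beta &
              [\/ stable_focus (vfield chi phi s um g) (v, 0),
                  stable_node (vfield chi phi s um g) (v, 0) |
                  non_hyperbolic (vfield chi phi s um g) (v, 0)]]
    & (g beta < um /\ (um%:E < ginf)%E) ->
        exists vp vm : R,
          [/\ forall p, equilibrium chi phi s um g p <-> p = (vp, 0) \/ p = (vm, 0),
              0 < vp < beta /\ beta < vm,
              um = g vp /\ um = g vm,
              saddle (vfield chi phi s um g) (vm, 0) &
              stable_focus (vfield chi phi s um g) (vp, 0) \/
              stable_node (vfield chi phi s um g) (vp, 0)]],
  (* (2) g_oo > g(0), possibly g_oo = +oo *)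
  ((g 0)%:E < ginf)%E ->
  [/\ (um < g beta \/ (ginf <= um%:E)%E) ->
        forall p, ~ equilibrium chi phi s um g p,
      (um = g beta \/ (g 0 < um /\ (um%:E < ginf)%E)) ->
        exists v : R,
          [/\ forall p, equilibrium chi phi s um g p <-> p = (v, 0),
              beta <= v &
              saddle (vfield chi phi s um g) (v, 0) \/
              non_hyperbolic (vfield chi phi s um g) (v, 0)]
    & (g beta < um <= g 0) ->
        exists vp vm : R,
          [/\ forall p, equilibrium chi phi s um g p <-> p = (vp, 0) \/ p = (vm, 0),
              0 <= vp < beta /\ beta < vm,
              um = g vp /\ um = g vm,
              saddle (vfield chi phi s um g) (vm, 0) &
              stable_focus (vfield chi phi s um g) (vp, 0) \/
              stable_node (vfield chi phi s um g) (vp, 0)]] &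
  (* (3) g_oo = g(0) *)
  ginf = (g 0)%:E ->
  [/\ (um < g beta \/ g 0 < um) ->
        forall p, ~ equilibrium chi phi s um g p,
      um = g beta ->
        (forall p, equilibrium chi phi s um g p <-> p = (beta, 0)) /\
        non_hyperbolic (vfield chi phi s um g) (beta, 0)
    & (g beta < um < g 0) ->
        exists vp vm : R,
          [/\ forall p, equilibrium chi phi s um g p <-> p = (vp, 0) \/ p = (vm, 0),
              0 < vp < beta /\ beta < vm,
              um = g vp /\ um = g vm,
              saddle (vfield chi phi s um g) (vm, 0) &
              stable_focus (vfield chi phi s um g) (vp, 0) \/
              stable_node (vfield chi phi s um g) (vp, 0)]]].
Proof.
by apply: main_M.
Qed.
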